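(* Let $\Gamma=(\mathcal{V},\mathcal{H})$ be an oriented hypergraph. Up to changing the orientation of some hyperedges, $\Gamma$ is bipartite if and only if $\Gamma$ is vertex-bipartite.
   Context: An oriented hypergraph is a pair $\Gamma=(\mathcal{V},\mathcal{H})$ where $\mathcal{V}$ is a finite set of vertices and each hyperedge $h\in\mathcal{H}$ is a pair $(h_{in},h_{out})$ of disjoint nonempty subsets of $\mathcal{V}$ (inputs and outputs); standing assumption: no isolated vertices. Changing the orientation of $h$ replaces $(h_{in},h_{out})$ by $(h_{out},h_{in})$. $\Gamma$ is bipartite if $\mathcal{V}=\mathcal{V}_1\sqcup\mathcal{V}_2$ such that every hyperedge either has all its inputs in $\mathcal{V}_1$ and all its outputs in $\mathcal{V}_2$, or vice versa. $\Gamma$ is vertex-bipartite if $\mathcal{H}=\mathcal{H}_1\sqcup\mathcal{H}_2$ such that for every vertex $v$, either $v$ is an input only for hyperedges in $\mathcal{H}_1$ and an output only for hyperedges in $\mathcal{H}_2$, or $v$ is an input only for hyperedges in $\mathcal{H}_2$ and an output only for hyperedges in $\mathcal{H}_1$. *)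

(* Defs.v *)
From mathcomp Require Import all_boot.
Set Implicit Arguments. Unset Strict Implicit. Unset Printing Implicit Defensive.

Definition oriented_hypergraph (V H : finType) (hin hout : H -> {set V}) : Prop :=
  (forall h, [disjoint hin h & hout h]) /\
  (forall h, hin h != set0) /\
  (forall h, hout h != set0) /\
  (* standing assumption: no isolated vertices *)
  (forall v : V, exists h : H, (v \in hin h) || (v \in hout h)).

Definition reorient_in (V H : finType) (S : {set H}) (hin hout : H -> {set V}) :=
  fun h => if h \in S then hout h else hin h.
Definition reorient_out (V H : finType) (S : {set H}) (hin hout : H -> {set V}) :=
  fun h => if h \in S then hin h else hout h.

Definition bipartite (V H : finType) (hin hout : H -> {set V}) : Prop :=
  exists V1 V2 : {set V},
    [disjoint V1 & V2] /\ V1 :|: V2 = setT /\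
    forall h, (hin h \subset V1 /\ hout h \subset V2) \/
              (hin h \subset V2 /\ hout h \subset V1).

Definition vertex_bipartite (V H : finType) (hin hout : H -> {set V}) : Prop :=
  exists H1 H2 : {set H},
    [disjoint H1 & H2] /\ H1 :|: H2 = setT /\
    forall v : V,
      ((forall h, v \in hin h -> h \in H1) /\ (forall h, v \in hout h -> h \in H2)) \/
      ((forall h, v \in hin h -> h \in H2) /\ (forall h, v \in hout h -> h \in H1)).

(* Main.v *)
Require Import Defs.
From mathcomp Require Import all_boot.

Theorem mainTheorem2 (V H : finType) (hin hout : H -> {set V}) :
  oriented_hypergraph hin hout ->
  ((exists S : {set H}, bipartite (reorient_in S hin hout) (reorient_out S hin hout))
   <-> vertex_bipartite hin hout).
Proof.
move=> [Hdis [Hin0 [Hout0 _]]]; split.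
- move=> [S [V1 [V2 [dV [UV Hh]]]]].
  have Hc : forall h, (hin h \subset V1 /\ hout h \subset V2) \/
                      (hin h \subset V2 /\ hout h \subset V1).
    move=> h; case: (Hh h); rewrite /reorient_in /reorient_out;
    case: (h \in S) => [] [a b]; tauto.
  have nboth : forall v, v \in V1 -> v \in V2 -> False.
    by move=> v a b; rewrite (disjointFr dV a) in b.
  have inV : forall v, (v \in V1) || (v \in V2).
    by move=> v; rewrite -in_setU UV inE.
  exists [set h | hin h \subset V1], (~: [set h | hin h \subset V1]).
  split; first by rewrite disjoints_subset setCK subxx.
  split; first by rewrite setUCr.
  move=> v; case/orP: (inV v) => Hv.
  + left; split => h Hvh; rewrite ?inE.
    * case: (Hc h) => [[a _]|[a _]] //.
      by exfalso; apply: (nboth v) => //; apply: (subsetP a).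
    * apply/negP => Hs; case: (Hc h) => [[_ b]|[a _]].
      - by apply: (nboth v) => //; apply: (subsetP b).
      - case/set0Pn: (Hin0 h) => x Hx.
        by apply: (nboth x); [apply: (subsetP Hs)|apply: (subsetP a)].
  + right; split => h Hvh; rewrite ?inE.
    * apply/negP => Hs; by apply: (nboth v) => //; apply: (subsetP Hs).
    * case: (Hc h) => [[a _]|[_ b]] //.
      by exfalso; apply: (nboth v) => //; apply: (subsetP b).
- move=> [H1 [H2 [dH [UH Hv]]]].
  have nboth : forall h, h \in H1 -> h \in H2 -> False.
    by move=> h a b; rewrite (disjointFr dH a) in b.
  have inH : forall h, (h \in H1) || (h \in H2).
    by move=> h; rewrite -in_setU UH inE.
  pose V1 := [set v | [forall h, (v \in hin h) ==> (h \in H1)] &&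
                      [forall h, (v \in hout h) ==> (h \in H2)]].
  have V1P : forall v, v \in V1 <->
     ((forall h, v \in hin h -> h \in H1) /\ (forall h, v \in hout h -> h \in H2)).
    move=> v; rewrite inE; split.
    + by case/andP => /forallP a /forallP b; split => h; [move: (a h)|move: (b h)] => /implyP.
    + by case=> a b; apply/andP; split; apply/forallP => h; apply/implyP; [apply: a|apply: b].
  exists H2, V1, (~: V1); split.
    by rewrite disjoints_subset setCK subxx.
  split; first by rewrite setUCr.
  move=> h; rewrite /reorient_in /reorient_out.
  case/orP: (inH h) => Hh.
  + have nh2 : h \notin H2 by apply/negP => b; apply: (nboth h).
    rewrite (negbTE nh2); left; split; apply/subsetP => v Hvh.
    * apply/V1P; case: (Hv v) => // [[a _]].
      by exfalso; apply: (nboth h) => //; apply: a.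
    * rewrite inE; apply/negP => /V1P [_ b].
      by apply: (nboth h) => //; apply: b.
  + rewrite Hh; left; split; apply/subsetP => v Hvh.
    * apply/V1P; case: (Hv v) => // [[_ b]].
      by exfalso; apply: (nboth h) => //; apply: b.
    * rewrite inE; apply/negP => /V1P [a _].
      by apply: (nboth h) => //; apply: a.
Qed.
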